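(* Let $R$ be a ring with enough idempotents and let $f^2=f\in R$ be such that the right ideal $fR$ is faithful, i.e. $\{r\in R: fRr=0\}=0$. Let $\rho:R\to R\,\mathrm{End}_{fRf}(fR)$ be the canonical map $r\mapsto\rho_r$, where $(x)\rho_r=xr$. Then: (a) $\rho$ is an injective ring homomorphism, and $R\,\mathrm{End}_{fRf}(fR)$ is a left quotient ring of $R$ via $\rho$. (b) If $e^2=e\in R$ and $Re$ is injective in $R\mathrm{Mod}$, then $R\,\mathrm{Hom}_{fRf}(fR,fRe)\cong Re$ as left $R$-modules, and $fRe$ is an injective left $fRf$-module.
   Context: All rings are associative, not necessarily unital. Morphisms are written on the right of their arguments. - $R$ has enough idempotents if there are pairwise orthogonal idempotents $q_\alpha$ with $R=\bigoplus Rq_\alpha=\bigoplus q_\alpha R$. - $R\mathrm{Mod}$ is the category of unitary left modules ($RM=M$). - For a left $fRf$-module $X$, $\mathrm{Hom}_{fRf}(fR,X)$ is a left $R$-module via $(x)(r\varphi)=(xr)\varphi$. $R\,\mathrm{Hom}_{fRf}(fR,X)$ denotes its unitary part $R\cdot\mathrm{Hom}_{fRf}(fR,X)$, and $R\,\mathrm{End}_{fRf}(fR)=R\cdot\mathrm{End}_{fRf}(fR)$, which is a ring. - A ring $Q$ containing a subring $R'$ is a left quotient ring of $R'$ if ${}_{R'}Q$ is a rational extension of ${}_{R'}R'$. That is, for every $R'\subseteq D\subseteq Q$ and every $R'$-homomorphism $g:D\to Q$ with $R'\subseteq\ker g$, one has $g=0$. *)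

(* Defs.v *)
(* Non-unital rings are encoded as a MathComp zmodType R
   together with an explicit multiplication  mul : R -> R -> R  satisfying
   associativity and both distributive laws (MathComp rings are unital, so
   they cannot be used directly). *)
From HB Require Import structures.
From mathcomp Require Import all_boot all_order all_algebra.
Set Implicit Arguments. Unset Strict Implicit. Unset Printing Implicit Defensive.
Import GRing.Theory.
Local Open Scope ring_scope.

Record rng_axioms (R : zmodType) (mul : R -> R -> R) : Prop := {
  rng_mulA : forall x y z, mul x (mul y z) = mul (mul x y) z;
  rng_mulDl : forall x y z, mul (x + y) z = mul x z + mul y z;
  rng_mulDr : forall x y z, mul x (y + z) = mul x y + mul x z }.

(* left modules (over a subset S of R, e.g. S = R or S = fRf) *)
Record lmodule (R : zmodType) := LModule { mcar : zmodType; mact : R -> mcar -> mcar }.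

Section Defs.
Variables (R : zmodType) (mul : R -> R -> R).

Section Sums.
Variables (I : Type) (P : I -> R -> Prop).
Definition sum_generates : Prop :=
  forall r : R, exists n (a : 'I_n -> I) (x : 'I_n -> R),
    (forall i, P (a i) (x i)) /\ r = \sum_(i < n) x i.
Definition sum_independent : Prop :=
  forall n (a : 'I_n -> I) (x : 'I_n -> R), injective a ->
    (forall i, P (a i) (x i)) -> \sum_(i < n) x i = 0 -> forall i, x i = 0.
Definition internal_direct_sum : Prop := sum_generates /\ sum_independent.
End Sums.

Definition enough_idempotents : Prop :=
  exists (I : Type) (q : I -> R),
    (forall a, mul (q a) (q a) = q a) /\
    (forall a b, a <> b -> mul (q a) (q b) = 0) /\
    internal_direct_sum (fun a x => exists s, x = mul s (q a)) /\
    internal_direct_sum (fun a x => exists s, x = mul (q a) s).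

Definition in_Re (e x : R) : Prop := exists r, x = mul r e.
Definition in_fR (f x : R) : Prop := exists r, x = mul f r.
Definition in_fRf (f x : R) : Prop := exists r, x = mul (mul f r) f.
Definition in_fRe (f e x : R) : Prop := exists r, x = mul (mul f r) e.

(* ---------- Hom_{fRf}(fR, X) for a left fRf-submodule X of R ----------
   A map phi : fR -> X is represented by its canonical extension to R,
   x |-> phi (f x)  (x |-> f x is the projection of R onto fR); so a
   function phi : R -> R represents an element of Hom_{fRf}(fR,X) iff
   phi x = phi (f x) for all x, and its restriction to fR is additive,
   fRf-linear and X-valued.  Maps are written on the right, as in the paper. *)
Variable f : R.

Definition is_hom (X : R -> Prop) (phi : R -> R) : Prop :=
  (forall x, phi x = phi (mul f x)) /\
  (forall x y, in_fR f x -> in_fR f y -> phi (x + y) = phi x + phi y) /\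
  (forall a x, in_fRf f a -> in_fR f x -> phi (mul a x) = mul a (phi x)) /\
  (forall x, in_fR f x -> X (phi x)).

Definition hadd (phi psi : R -> R) : R -> R := fun x => phi x + psi x.
Definition hopp (phi : R -> R) : R -> R := fun x => - phi x.
Definition hzero : R -> R := fun _ => 0.
Definition hmul (phi psi : R -> R) : R -> R := fun x => psi (phi x).
Definition hact (r : R) (phi : R -> R) : R -> R := fun x => phi (mul x r).

(* the unitary part R Hom_{fRf}(fR, X) = R . Hom_{fRf}(fR, X) *)
Definition in_RHom (X : R -> Prop) (phi : R -> R) : Prop :=
  exists n (r : 'I_n -> R) (psi : 'I_n -> R -> R),
    (forall i, is_hom X (psi i)) /\
    (forall x, phi x = \sum_(i < n) hact (r i) (psi i) x).

Definition rho (r : R) : R -> R := fun x => mul (mul f x) r.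

(* Q is a left quotient ring of its subring R' : Q is a rational extension
   of R' as left R'-modules (R' acting by left multiplication in Q). *)
Definition left_quotient_ring (Q R' : (R -> R) -> Prop) : Prop :=
  forall D : (R -> R) -> Prop,
    (forall u, R' u -> D u) -> (forall u, D u -> Q u) ->
    D hzero -> (forall u v, D u -> D v -> D (hadd u v)) ->
    (forall u, D u -> D (hopp u)) ->
    (forall s u, R' s -> D u -> D (hmul s u)) ->
    forall g : (R -> R) -> (R -> R),
      (forall u, D u -> Q (g u)) ->
      (forall u v, D u -> D v -> g (hadd u v) = hadd (g u) (g v)) ->
      (forall s u, R' s -> D u -> g (hmul s u) = hmul s (g u)) ->
      (forall u, R' u -> g u = hzero) ->
      forall u, D u -> g u = hzero.
End Defs.

Section Inj.
Variables (R : zmodType) (mul : R -> R -> R) (S : R -> Prop).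

Definition is_lmod (M : lmodule R) : Prop :=
  (forall a (m m' : mcar M), S a -> mact a (m + m') = mact a m + mact a m') /\
  (forall a b (m : mcar M), S a -> S b -> mact (a + b) m = mact a m + mact b m) /\
  (forall a b (m : mcar M), S a -> S b -> mact (mul a b) m = mact a (mact b m)).

Definition unitary (M : lmodule R) : Prop :=
  forall m : mcar M, exists n (a : 'I_n -> R) (x : 'I_n -> mcar M),
    (forall i, S (a i)) /\ m = \sum_(i < n) mact (a i) (x i).

Definition is_mhom (M N : lmodule R) (h : mcar M -> mcar N) : Prop :=
  (forall m m', h (m + m') = h m + h m') /\
  (forall a m, S a -> h (mact a m) = mact a (h m)).

Definition is_mhom_to (X : R -> Prop) (M : lmodule R) (h : mcar M -> R) : Prop :=
  (forall m, X (h m)) /\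
  (forall m m', h (m + m') = h m + h m') /\
  (forall a m, S a -> h (mact a m) = mul a (h m)).

Definition injective_submod (X : R -> Prop) : Prop :=
  forall (A B : lmodule R), is_lmod A -> unitary A -> is_lmod B -> unitary B ->
    forall i : mcar A -> mcar B, is_mhom i -> injective i ->
    forall g : mcar A -> R, is_mhom_to X g ->
    exists h : mcar B -> R, is_mhom_to X h /\ forall a, h (i a) = g a.
End Inj.

(* Main.v *)
Require Import Defs.
From HB Require Import structures.
From mathcomp Require Import all_boot all_order all_algebra.
From mathcomp Require Import boolp functions.
Set Implicit Arguments. Unset Strict Implicit. Unset Printing Implicit Defensive.
Import GRing.Theory.
Local Open Scope ring_scope.

Structure closedP (Z : zmodType) := ClosedP {
  cp :> Z -> Prop; cp0 : cp 0;
  cpD : forall x y, cp x -> cp y -> cp (x + y); cpN : forall x, cp x -> cp (- x) }.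

Section SubZ.
Variables (Z : zmodType) (C : closedP Z).
Definition subT := {x : Z | `[< C x >]}.
HB.instance Definition _ := Choice.on subT.
Definition sz0 : subT := exist _ 0 (asboolT (cp0 C)).
Definition szadd (x y : subT) : subT :=
  exist _ (val x + val y) (asboolT (cpD (asboolP _ (valP x)) (asboolP _ (valP y)))).
Definition szopp (x : subT) : subT :=
  exist _ (- val x) (asboolT (cpN (asboolP _ (valP x)))).
Lemma szaddA : associative szadd.
Proof. by move=> x y z; apply: val_inj; rewrite /= addrA. Qed.
Lemma szaddC : commutative szadd.
Proof. by move=> x y; apply: val_inj; rewrite /= addrC. Qed.
Lemma szadd0 : left_id sz0 szadd.
Proof. by move=> x; apply: val_inj; rewrite /= add0r. Qed.
Lemma szaddN : left_inverse sz0 szopp szadd.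
Proof. by move=> x; apply: val_inj; rewrite /= addNr. Qed.
HB.instance Definition _ := GRing.isZmodule.Build subT szaddA szaddC szadd0 szaddN.
Lemma val_sum I (r : seq I) (F : I -> subT) :
  val (\sum_(i <- r) F i) = \sum_(i <- r) val (F i).
Proof. exact: (big_morph val (fun x y => erefl) (erefl : val sz0 = 0)). Qed.
Lemma val_sumo n (F : 'I_n -> subT) :
  val (\sum_(i < n) F i) = \sum_(i < n) val (F i).
Proof. exact: (big_morph val (fun x y => erefl) (erefl : val sz0 = 0)). Qed.
Lemma subP (x : subT) : C (val x).
Proof. exact: (asboolP _ (valP x)). Qed.
End SubZ.

Section Rng.
Variables (R : zmodType) (mul : R -> R -> R) (ax : rng_axioms mul).
Local Notation "a ** b" := (mul a b) (at level 40, left associativity).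

Lemma mA (x y z : R) : x ** (y ** z) = x ** y ** z. Proof. exact (rng_mulA ax x y z). Qed.
Lemma mDl (x y z : R) : (x + y) ** z = x ** z + y ** z. Proof. exact (rng_mulDl ax x y z). Qed.
Lemma mDr (x y z : R) : x ** (y + z) = x ** y + x ** z. Proof. exact (rng_mulDr ax x y z). Qed.
Lemma m0l (x : R) : 0 ** x = 0.
Proof. have h : 0 ** x + 0 ** x = 0 ** x + 0 by rewrite -mDl !addr0. exact (addrI _ h). Qed.
Lemma m0r (x : R) : x ** 0 = 0.
Proof. have h : x ** 0 + x ** 0 = x ** 0 + 0 by rewrite -mDr !addr0. exact (addrI _ h). Qed.
Lemma mNl (x y : R) : (- x) ** y = - (x ** y).
Proof. by apply/eqP; rewrite -subr_eq0 opprK -mDl addNr m0l. Qed.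
Lemma mNr (x y : R) : x ** (- y) = - (x ** y).
Proof. by apply/eqP; rewrite -subr_eq0 opprK -mDr addNr m0r. Qed.
Lemma mBr (x y z : R) : x ** (y - z) = x ** y - x ** z.
Proof. by rewrite mDr mNr. Qed.
Lemma msuml I (r : seq I) (P : pred I) (F : I -> R) y :
  (\sum_(i <- r | P i) F i) ** y = \sum_(i <- r | P i) (F i ** y).
Proof. exact: (big_morph (fun x => x ** y) (fun a b => mDl a b y) (m0l y)). Qed.
Lemma msumr I (r : seq I) (P : pred I) (F : I -> R) y :
  y ** (\sum_(i <- r | P i) F i) = \sum_(i <- r | P i) (y ** F i).
Proof. exact: (big_morph (fun x => y ** x) (fun a b => mDr y a b) (m0r y)). Qed.

Section Main.
Variables (f : R) (ff : f ** f = f)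
  (faith : forall r : R, (forall s : R, mul (mul f s) r = 0) -> r = 0).

Lemma fff (x : R) : x ** f ** f = x ** f.
Proof. by rewrite -mA ff. Qed.

Ltac norm := rewrite ?mA ?ff ?fff.

Lemma uniqw (y y' : R) : (forall x, f ** x ** y = f ** x ** y') -> y = y'.
Proof.
move=> H; apply/eqP; rewrite -subr_eq0; apply/eqP; apply: faith => s.
by rewrite mBr H subrr.
Qed.

Lemma fR_f w : in_fR mul f w -> f ** w = w.
Proof. by case=> t ->; norm. Qed.

Lemma fRf_l a : in_fRf mul f a -> f ** a = a.
Proof. by case=> t ->; norm. Qed.
Lemma fRf_r a : in_fRf mul f a -> a ** f = a.
Proof. by case=> t ->; norm. Qed.

Lemma RHom_fx X phi : in_RHom mul f X phi -> forall x, phi x = phi (f ** x).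
Proof.
case=> n [r [psi [Hp He]]] x; rewrite !He; apply: eq_bigr => i _ /=.
rewrite /hact; case: (Hp i) => H1 _; by rewrite H1 [in RHS]H1; norm.
Qed.

Lemma RHom_lin X phi : in_RHom mul f X phi -> forall a z, in_fRf mul f a ->
  in_fR mul f z -> phi (a ** z) = a ** phi z.
Proof.
case=> n [r [psi [Hp He]]] a z Ha Hz; rewrite !He msumr; apply: eq_bigr => i _ /=.
rewrite /hact; case: (Hp i) => _ [_ [H3 _]]; rewrite -mA H3 //.
by case: Hz => t ->; exists (t ** r i); rewrite mA.
Qed.

Lemma RHom_val X phi : X 0 -> (forall u v, X u -> X v -> X (u + v)) ->
  in_RHom mul f X phi -> forall z, X (phi z).
Proof.
move=> X0 XD [n [r [psi [Hp He]]]] z; rewrite He.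
apply: (big_ind X) => // i _; rewrite /hact; case: (Hp i) => H1 [_ [_ H4]].
by rewrite H1; apply: H4; exists (z ** r i).
Qed.

Lemma partA :
  (forall r, in_RHom mul f (in_fR mul f) (rho mul f r)) /\
   (forall r s x, rho mul f (r + s) x = hadd (rho mul f r) (rho mul f s) x) /\
   (forall r s x, rho mul f (mul r s) x = hmul (rho mul f r) (rho mul f s) x) /\
   (forall r s, rho mul f r = rho mul f s -> r = s) /\
   left_quotient_ring (in_RHom mul f (in_fR mul f))
                      (fun u => exists r, u = rho mul f r).
Proof.
split.
  move=> r; exists 1%N, (fun _ => r), (fun _ x => f ** x); split.
    move=> _; split; first by move=> x; norm.
    split; first by move=> x y _ _; rewrite mDr.
    split; last by move=> x _; exists x.
    by move=> a x [t ->] _; norm.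
  by move=> x; rewrite big_ord1 /hact /rho mA.
split; first by move=> r s x; rewrite /rho /hadd mDr.
split; first by move=> r s x; rewrite /rho /hmul; norm.
split.
  move=> r s H; apply: uniqw => x.
  by have := congr1 (fun g => g x) H; rewrite /rho.
move=> D HR HQ D0 DD DN DM g gQ gD gM g0 u Du.
have Qu := HQ u Du; have Qv := gQ u Du.
have key : forall v, in_RHom mul f (in_fR mul f) v ->
    forall x t, v (f ** x ** (f ** t)) = f ** x ** v (f ** t).
  move=> v Qv' x t.
  have -> : f ** x ** (f ** t) = (f ** x ** f) ** (f ** t) by norm.
  rewrite (RHom_lin Qv'); first last.
  - by exists t.
  - by exists x.
  rewrite -(mA (f ** x) f) [f ** v _]fR_f //.
  apply: (RHom_val _ _ Qv'); first by exists 0; rewrite m0r.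
  by move=> a b [c ->] [d ->]; exists (c + d); rewrite mDr.
have H1 : forall t, hmul (rho mul f (f ** t)) u = rho mul f (u (f ** t)).
  by move=> t; apply: funext => x; rewrite /hmul /rho key.
have H2 : forall t, hmul (rho mul f (f ** t)) (g u) = @hzero R.
  move=> t; rewrite -gM //; last by exists (f ** t).
  by apply: g0; rewrite H1; eexists.
apply: funext => y; rewrite /hzero (RHom_fx Qv).
apply: faith => x.
have := congr1 (fun h => h x) (H2 y); rewrite /hmul /rho /hzero key //.
Qed.

Definition chooseR (P : R -> Prop) : R :=
  if pselect (exists y, P y) is left H then proj1_sig (cid H) else 0.
Lemma chooseRP (P : R -> Prop) : (exists y, P y) -> P (chooseR P).
Proof. by rewrite /chooseR => H; case: pselect => // H'; exact: proj2_sig (cid H'). Qed.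

Section Re.
Variable e : R.
Lemma Re0 : in_Re mul e 0. Proof. by exists 0; rewrite m0l. Qed.
Lemma ReD u v : in_Re mul e u -> in_Re mul e v -> in_Re mul e (u + v).
Proof. by case=> a -> [b ->]; exists (a + b); rewrite mDl. Qed.
Lemma ReM a u : in_Re mul e u -> in_Re mul e (a ** u).
Proof. by case=> b ->; exists (a ** b); rewrite mA. Qed.
Lemma fRe_Re u : in_fRe mul f e u -> in_Re mul e u.
Proof. by case=> b ->; exists (f ** b). Qed.
Lemma fRe_f u : in_fRe mul f e u -> f ** u = u.
Proof. by case=> b ->; norm. Qed.
Lemma fR0 : in_fR mul f 0. Proof. by exists 0; rewrite m0r. Qed.
Lemma fRD u v : in_fR mul f u -> in_fR mul f v -> in_fR mul f (u + v).
Proof. by case=> a -> [b ->]; exists (a + b); rewrite mDr. Qed.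
End Re.

Section HomRep.
Variables (EI : enough_idempotents mul) (e : R) (ee : e ** e = e)
  (Hinj : injective_submod mul (fun _ => True) (in_Re mul e))
  (psi : R -> R) (Hpsi : is_hom mul f (in_fRe mul f e) psi).

Definition PA (m : R) := exists s : seq (R * R), m = \sum_(p <- s) p.1 ** (f ** p.2).
Lemma PA0 : PA 0. Proof. by exists [::]; rewrite big_nil. Qed.
Lemma PAD u v : PA u -> PA v -> PA (u + v).
Proof. by case=> s -> [t ->]; exists (s ++ t); rewrite big_cat. Qed.
Lemma PAN u : PA u -> PA (- u).
Proof.
case=> s ->; exists (map (fun p => (- p.1, p.2)) s).
by rewrite big_map -sumrN; apply: eq_bigr => p _ /=; rewrite mNl.
Qed.
Definition CA := ClosedP PA0 PAD PAN.
Definition TA := subT CA.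
Lemma actA_subproof a (m : TA) : `[< PA (a ** val m) >].
Proof.
apply/asboolP; case: (subP m) => s ->; exists (map (fun p => (a ** p.1, p.2)) s).
by rewrite big_map msumr; apply: eq_bigr => p _; rewrite mA.
Qed.
Definition mkA m (H : `[< PA m >]) : TA := exist (fun x : R => `[< CA x >]) m H.
Definition actA a (m : TA) : TA := mkA (actA_subproof a m).
Definition AM : lmodule R := @LModule R TA actA.
Definition BM : lmodule R := @LModule R R mul.

Definition gA (m : TA) : R := chooseR (fun w => in_Re mul e w /\
   forall x, f ** x ** w = psi (f ** x ** val m)).

Lemma psi0 : psi 0 = 0.
Proof.
case: Hpsi => _ [H2 _]; have := H2 0 0 (fR0) (fR0); rewrite addr0 => h.
have h' : psi 0 + psi 0 = psi 0 + 0 by rewrite -h addr0.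
exact: (addrI _ h').
Qed.

Lemma psi_sum I (r : seq I) (F : I -> R) : (forall i, in_fR mul f (F i)) ->
  psi (\sum_(i <- r) F i) = \sum_(i <- r) psi (F i).
Proof.
case: Hpsi => _ [H2 _] HF; elim: r => [|a r IH]; first by rewrite !big_nil psi0.
rewrite !big_cons H2 ?IH //; apply: (big_ind (in_fR mul f)) => //.
  exact: fR0.
exact: fRD.
Qed.

Lemma gA_spec (m : TA) : in_Re mul e (gA m) /\
   forall x, f ** x ** gA m = psi (f ** x ** val m).
Proof.
apply: (@chooseRP (fun w => in_Re mul e w /\
   forall x, f ** x ** w = psi (f ** x ** val m))).
case: (subP m) => s ->.
case: Hpsi => H1 [H2 [H3 H4]].
exists (\sum_(p <- s) p.1 ** psi (f ** p.2)); split.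
  apply: (big_ind (in_Re mul e)); [exact: Re0|exact: ReD|] => p _.
  by apply: ReM; apply: fRe_Re; apply: H4; exists p.2.
move=> x; rewrite msumr msumr psi_sum; last by move=> p; exists (x ** p.1 ** (f ** p.2)); norm.
apply: eq_bigr => p _.
have -> : f ** x ** (p.1 ** (f ** p.2)) = (f ** x ** p.1 ** f) ** (f ** p.2) by norm.
rewrite [RHS]H3; first last.
- by exists p.2.
- by exists (x ** p.1); norm.
rewrite -(mA (f ** x ** p.1) f (psi (f ** p.2))) [f ** psi _](@fRe_f e); last by apply: H4; exists p.2.
by norm.
Qed.

Lemma homrep r : exists y, in_Re mul e y /\ forall x, psi (x ** r) = f ** x ** y.
Proof.
case: Hpsi => H1 [H2 [H3 H4]].
have lmA : is_lmod mul (fun _ => True) AM.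
  split; first by move=> a m m' _; apply: val_inj; rewrite /= mDr.
  split; first by move=> a b m _ _; apply: val_inj; rewrite /= mDl.
  by move=> a b m _ _; apply: val_inj; rewrite /= mA.
have uA : unitary (fun _ => True) AM.
  case=> m Hm; have := asboolP _ Hm; case=> s Es.
  have Px : forall i, `[< PA (f ** (nth (0, 0) s i).2) >].
    by move=> i; apply/asboolP; exists [:: (f, (nth (0,0) s i).2)]; rewrite big_seq1 /=; norm.
  exists (size s), (fun i => (nth (0,0) s i).1),
    (fun i => mkA (Px i)); split => //.
  apply: val_inj; rewrite /= (val_sumo (C := CA)) /= Es (big_nth (0,0)) big_mkord.
  by apply: eq_bigr.
have lmB : is_lmod mul (fun _ => True) BM.
  split; first by move=> a m m' _; rewrite /= mDr.
  split; first by move=> a b m _ _; rewrite /= mDl.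
  by move=> a b m _ _; rewrite /= mA.
have uB : unitary (fun _ => True) BM.
  move=> m; case: EI => I [q [_ [_ [[gen _] _]]]].
  case: (gen m) => n [a [x [Hx ->]]].
  exists n, (fun i => proj1_sig (cid (Hx i))), (fun i => q (a i)); split => //.
  by apply: eq_bigr => i _ /=; case: (cid (Hx i)).
have hi : is_mhom (fun _ => True) (M := AM) (N := BM) val.
  by split.
have hg : is_mhom_to mul (fun _ => True) (in_Re mul e) (M := AM) gA.
  split; first by move=> m; case: (gA_spec m).
  split.
    move=> m m'; apply: uniqw => x; rewrite mDr !(proj2 (gA_spec _)) /=.
    rewrite mDr H2 //; first by exists (x ** val m); norm.
    by exists (x ** val m'); norm.
  move=> a m _; apply: uniqw => x; rewrite !(proj2 (gA_spec _)) /=.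
  by rewrite !mA -(mA f x a) (proj2 (gA_spec _)) !mA.
have [h [[hRe [hD hM]] hext]] := Hinj lmA uA lmB uB hi val_inj hg.
exists (h r); split => // x.
have Pm : `[< PA (f ** x ** r) >].
  by apply/asboolP; exists [:: (f, x ** r)]; rewrite big_seq1 /=; norm.
have e1 := hext (mkA Pm); rewrite /= in e1.
have e2 : h (f ** x ** r) = f ** x ** h r := hM (f ** x) r I.
rewrite H1 mA -e2 e1; apply: uniqw => x'.
rewrite (proj2 (gA_spec _)) /=.
have -> : f ** x' ** (f ** x ** r) = (f ** x' ** f) ** (f ** x ** r) by norm.
rewrite [RHS]H3; first last.
- by exists (x ** r); norm.
- by exists x'.
rewrite -(mA (f ** x') f (psi _)) [f ** psi _](@fRe_f e) //; apply: H4; by exists (x ** r); norm.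
Qed.
End HomRep.

Definition Phi (phi : R -> R) : R := chooseR (fun y => forall x, phi x = f ** x ** y).

Lemma PhiE phi y : (forall x, phi x = f ** x ** y) -> Phi phi = y.
Proof.
move=> H; have := @chooseRP (fun y => forall x, phi x = f ** x ** y) (ex_intro _ y H).
rewrite -/(Phi phi) => H'; apply: uniqw => x; by rewrite -H -H'.
Qed.

Lemma RHom_rep (EI : enough_idempotents mul) e (ee : e ** e = e)
  (Hinj : injective_submod mul (fun _ => True) (in_Re mul e)) phi :
  in_RHom mul f (in_fRe mul f e) phi ->
  exists y, in_Re mul e y /\ forall x, phi x = f ** x ** y.
Proof.
case=> n [r [psi [Hp He]]].
pose yi i := proj1_sig (cid (homrep EI Hinj (Hp i) (r i))).
have Hyi : forall i, in_Re mul e (yi i) /\ forall x, psi i (x ** r i) = f ** x ** yi i.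
  by move=> i; rewrite /yi; case: cid.
exists (\sum_(i < n) yi i); split.
  by apply: (big_ind (in_Re mul e)); [exact: Re0|exact: ReD|] => i _; case: (Hyi i).
by move=> x; rewrite He msumr; apply: eq_bigr => i _; rewrite /hact; case: (Hyi i).
Qed.

Lemma fRfI (y : R) : in_fRf mul f (f ** y ** f). Proof. by exists y. Qed.
Lemma fRfI' (x y : R) : in_fRf mul f (f ** x ** y ** f). Proof. by exists (x ** y); norm. Qed.
Lemma fRfI'' (x : R) : in_fRf mul f (f ** x ** f ** f). Proof. by exists x; norm. Qed.

Section NX.
Variables (X : lmodule R) (HX : is_lmod mul (in_fRf mul f) X).

Lemma mact0 a : in_fRf mul f a -> @mact R X a 0 = 0.
Proof.
move=> Ha; case: HX => H1 _; have := H1 a 0 0 Ha; rewrite addr0 => h.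
have h' : @mact R X a 0 + @mact R X a 0 = @mact R X a 0 + 0 by rewrite -h addr0.
exact: (addrI _ h').
Qed.
Lemma mactN a m : in_fRf mul f a -> @mact R X a (- m) = - @mact R X a m.
Proof.
move=> Ha; case: HX => H1 _; apply/eqP; rewrite -subr_eq0 opprK addrC -H1 //.
by rewrite subrr mact0.
Qed.

Definition PN (phi : R -> mcar X) := exists s : seq (R * mcar X),
  forall x, phi x = \sum_(p <- s) @mact R X (f ** x ** p.1 ** f) p.2.
Lemma PN0 : PN 0. Proof. by exists [::] => x; rewrite big_nil. Qed.
Lemma PND u v : PN u -> PN v -> PN (u + v).
Proof. by case=> s Hs [t Ht]; exists (s ++ t) => x; rewrite big_cat -Hs -Ht. Qed.
Lemma PNN u : PN u -> PN (- u).
Proof.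
case=> s Hs; exists (map (fun p => (p.1, - p.2)) s) => x.
have -> : (- u) x = - u x by [].
rewrite big_map Hs -sumrN; apply: eq_bigr => p _ /=; rewrite mactN //.
exact: fRfI'.
Qed.
Definition CN := ClosedP PN0 PND PNN.
Definition TN := subT CN.
Definition mkN phi (H : `[< PN phi >]) : TN := exist (fun x => `[< CN x >]) phi H.
Lemma actN_subproof r (phi : TN) : `[< PN (fun x => val phi (x ** r)) >].
Proof.
apply/asboolP; case: (subP phi) => s Hs; exists (map (fun p => (r ** p.1, p.2)) s) => x.
by rewrite Hs big_map; apply: eq_bigr => p _ /=; rewrite !mA.
Qed.
Definition actN r (phi : TN) : TN := mkN (actN_subproof r phi).
Definition NM : lmodule R := @LModule R TN actN.

Lemma phiX_subproof (b : mcar X) : `[< PN (fun x => @mact R X (f ** x ** f ** f) b) >].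
Proof. by apply/asboolP; exists [:: (f, b)] => x; rewrite big_seq1. Qed.
Definition phiX b : TN := mkN (phiX_subproof b).

Lemma NM_lmod : is_lmod mul (fun _ => True) NM.
Proof.
case: HX => H1 [H2 H3].
split; first by move=> a m m' _; apply: val_inj; apply: funext => x.
split.
  move=> a b m _ _; apply: val_inj; apply: funext => x /=.
  case: (subP m) => s Hs; rewrite addrfctE /= !Hs -big_split; apply: eq_bigr => p _ /=.
  by rewrite !mDr !mDl H2 //; apply: fRfI'.
by move=> a b m _ _; apply: val_inj; apply: funext => x /=; rewrite mA.
Qed.

Lemma NM_unit : unitary (fun _ => True) NM.
Proof.
move=> m; case: (subP m) => s Hs.
exists (size s), (fun i => (nth (0, 0) s i).1), (fun i => phiX (nth (0,0) s i).2); split => //.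
apply: val_inj; rewrite (val_sumo (C := CN)) fct_sumE; apply: funext => x /=.
rewrite Hs (big_nth (0,0)) big_mkord; apply: eq_bigr => i _ /=.
by rewrite !mA fff.
Qed.
End NX.

Section Ext.
Variables (e : R) (Hinj : injective_submod mul (fun _ => True) (in_Re mul e))
  (A B : lmodule R) (HA : is_lmod mul (in_fRf mul f) A) (HB : is_lmod mul (in_fRf mul f) B)
  (i : mcar A -> mcar B) (Hi : is_mhom (in_fRf mul f) i) (iinj : injective i)
  (g : mcar A -> R) (Hg : is_mhom_to mul (in_fRf mul f) (in_fRe mul f e) g).

Lemma i_sum I (r : seq I) (F : I -> mcar A) : i (\sum_(j <- r) F j) = \sum_(j <- r) i (F j).
Proof.
case: Hi => iD _; apply: (big_morph i iD).
have h : i 0 + i 0 = i 0 + 0 by rewrite -iD !addr0.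
exact: (addrI _ h).
Qed.
Lemma g_sum I (r : seq I) (F : I -> mcar A) : g (\sum_(j <- r) F j) = \sum_(j <- r) g (F j).
Proof.
case: Hg => _ [gD _]; apply: (big_morph g gD).
have h : g 0 + g 0 = g 0 + 0 by rewrite -gD !addr0.
exact: (addrI _ h).
Qed.

Lemma iN_subproof (phi : TN HA) : `[< PN (X := B) (fun x => i (val phi x)) >].
Proof.
apply/asboolP; case: (subP phi) => s Hs; exists (map (fun p => (p.1, i p.2)) s) => x.
rewrite Hs i_sum big_map; apply: eq_bigr => p _ /=; case: Hi => _ ->//; exact: fRfI'.
Qed.
Definition iN (phi : TN HA) : TN HB := mkN HB (iN_subproof phi).

Definition gN (phi : TN HA) : R := chooseR (fun w => in_Re mul e w /\
   forall x, f ** x ** w = g (val phi x)).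

Lemma gN_spec (phi : TN HA) : in_Re mul e (gN phi) /\
   forall x, f ** x ** gN phi = g (val phi x).
Proof.
apply: (@chooseRP (fun w => in_Re mul e w /\ forall x, f ** x ** w = g (val phi x))).
case: (subP phi) => s Hs; case: Hg => gRe [gD gM].
exists (\sum_(p <- s) p.1 ** f ** g p.2); split.
  apply: (big_ind (in_Re mul e)); [exact: Re0|exact: ReD|] => p _.
  by apply: ReM; apply: fRe_Re.
move=> x; rewrite Hs g_sum msumr; apply: eq_bigr => p _.
rewrite gM; last exact: fRfI'. by rewrite !mA.
Qed.

Lemma fRe_injective : exists h : mcar B -> R,
  is_mhom_to mul (in_fRf mul f) (in_fRe mul f e) h /\ forall a, h (i a) = g a.
Proof.
have hiN : is_mhom (fun _ => True) (M := NM HA) (N := NM HB) iN.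
  case: Hi => iD iM; split.
    by move=> m m'; apply: val_inj; apply: funext => x /=; rewrite addrfctE /= iD.
  by move=> a m _; apply: val_inj; apply: funext => x.
have iNinj : injective iN.
  move=> m m' H; apply: val_inj; apply: funext => x; apply: iinj.
  exact: (congr1 (fun F => F x) (congr1 val H)).
have hgN : is_mhom_to mul (fun _ => True) (in_Re mul e) (M := NM HA) gN.
  case: Hg => gRe [gD gM].
  split; first by move=> m; case: (gN_spec m).
  split.
    move=> m m'; apply: uniqw => x; rewrite mDr !(proj2 (gN_spec _)) /=.
    by rewrite addrfctE /= gD.
  move=> a m _; apply: uniqw => x; rewrite !(proj2 (gN_spec _)) /=.
  by rewrite mA -(mA f x a) (proj2 (gN_spec _)).
have [h [[hRe [hD hM]] hext]] := Hinj (NM_lmod HA) (@NM_unit _ HA) (NM_lmod HB) (@NM_unit _ HB)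
  hiN iNinj hgN.
case: HB => B1 [B2 B3].
exists (fun b => f ** h (phiX HB b)); split.
  split; first by move=> m; case: (hRe (phiX HB m)) => s ->; exists s; rewrite mA.
  split.
    move=> m m'; rewrite -mDr -hD; congr (f ** h _).
    apply: val_inj; apply: funext => x /=; rewrite addrfctE /= B1 //; exact: fRfI''.
  move=> c m Hc.
  have -> : phiX HB (mact c m) = actN c (phiX HB m).
    apply: val_inj; apply: funext => x /=; rewrite -B3 //; last exact: fRfI''.
    by case: Hc => t ->; rewrite !mA ?ff ?fff.
  rewrite (hM c _ I); case: Hc => t ->; by rewrite !mA ?ff ?fff.
move=> a.
have -> : phiX HB (i a) = iN (phiX HA a).
  apply: val_inj; apply: funext => x /=; case: Hi => _ iM; rewrite iM //; exact: fRfI''.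
rewrite hext.
case: Hg => gRe [gD gM].
have -> : gN (phiX HA a) = g a.
  apply: uniqw => x; rewrite (proj2 (gN_spec _)) /= gM; last exact: fRfI''.
  rewrite fff.
  by rewrite -(mA (f ** x) f (g a)) [f ** g a](@fRe_f e).
apply: (@fRe_f e); exact: gRe.
Qed.
End Ext.
End Main.
End Rng.
Theorem lemma4p1 (R : zmodType) (mul : R -> R -> R) (f : R) :
  rng_axioms mul -> enough_idempotents mul ->
  mul f f = f ->
  (forall r : R, (forall s : R, mul (mul f s) r = 0) -> r = 0) ->
  (* (a) *)
  ((forall r, in_RHom mul f (in_fR mul f) (rho mul f r)) /\
   (forall r s x, rho mul f (r + s) x = hadd (rho mul f r) (rho mul f s) x) /\
   (forall r s x, rho mul f (mul r s) x = hmul (rho mul f r) (rho mul f s) x) /\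
   (forall r s, rho mul f r = rho mul f s -> r = s) /\
   left_quotient_ring (in_RHom mul f (in_fR mul f))
                      (fun u => exists r, u = rho mul f r)) /\
  (* (b) *)
  (forall e : R, mul e e = e ->
     injective_submod mul (fun _ => True) (in_Re mul e) ->
     (exists Phi : (R -> R) -> R,
        (forall phi, in_RHom mul f (in_fRe mul f e) phi -> in_Re mul e (Phi phi)) /\
        (forall phi psi, in_RHom mul f (in_fRe mul f e) phi ->
           in_RHom mul f (in_fRe mul f e) psi -> Phi (hadd phi psi) = Phi phi + Phi psi) /\
        (forall r phi, in_RHom mul f (in_fRe mul f e) phi ->
           Phi (hact mul r phi) = mul r (Phi phi)) /\
        (forall phi psi, in_RHom mul f (in_fRe mul f e) phi ->
           in_RHom mul f (in_fRe mul f e) psi -> Phi phi = Phi psi -> phi = psi) /\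
        (forall y, in_Re mul e y ->
           exists phi, in_RHom mul f (in_fRe mul f e) phi /\ Phi phi = y)) /\
     injective_submod mul (in_fRf mul f) (in_fRe mul f e)).

Proof.
move=> ax EI ff faith; split; first exact: (partA ax ff faith).
move=> e ee Hinj; split; last first.
  move=> A B HA _ HB _ i Hi iinj g Hg.
  exact: (fRe_injective ax ff faith Hinj HA HB Hi iinj Hg).
have rep := RHom_rep ax ff faith EI ee Hinj.
have PE := PhiE ax faith.
exists (Phi mul f); split.
  by move=> phi /rep [y [Hy Hx]]; rewrite (PE _ _ Hx).
split.
  move=> phi psi /rep [y [Hy Hx]] /rep [z [Hz Hz']].
  rewrite (PE _ _ Hx) (PE _ _ Hz'); apply: PE => x.
  by rewrite /hadd Hx Hz' (mDr ax).
split.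
  move=> r phi /rep [y [Hy Hx]]; rewrite (PE _ _ Hx); apply: PE => x.
  by rewrite /hact Hx !(mA ax).
split.
  move=> phi psi /rep [y [Hy Hx]] /rep [z [Hz Hz']].
  rewrite (PE _ _ Hx) (PE _ _ Hz') => Eyz; apply: funext => x.
  by rewrite Hx Hz' Eyz.
move=> y [s Hs].
exists (hact mul y (rho mul f e)); split.
  exists 1%N, (fun _ => y), (fun _ => rho mul f e); split.
    move=> _; split; first by move=> x; rewrite /rho (mA ax) ff.
    split; first by move=> x z _ _; rewrite /rho (mDr ax) (mDl ax).
    split.
      by move=> a x [t ->] _; rewrite /rho !(mA ax) ?ff ?(fff ax ff).
    by move=> x _; exists x.
  by move=> x; rewrite big_ord1.
apply: PE => x; rewrite /hact /rho Hs.
by rewrite !(mA ax) -(mA ax (mul (mul f x) s) e e) ee.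
Qed.
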